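(* Let $\Omega=\{1,\dots,m\}^{\mathbb{N}}$ with shift $\sigma$, let $\mathcal{M}$ be the set of Borel probabilities on $\Omega$ with the Monge–Kantorovich metric $d_{MK}$, and let $\mathfrak{T}:\mathcal{M}\to\mathcal{M}$ be the push-forward map $\mathfrak{T}(\mu)(E)=\mu(\sigma^{-1}(E))$. Then there exists $\mu\in\mathcal{M}$ whose forward orbit $\{\mathfrak{T}^n(\mu):n\ge 0\}$ is dense in $\mathcal{M}$.
   Context: $\Omega$ carries the metric $d_\Omega(\alpha,\beta)=2^{-k}$ with $k=\min\{i:\alpha_i\neq\beta_i\}$ (and $0$ if $\alpha=\beta$); $d_{MK}(\mu,\nu)=\sup\{\int f\,d\mu-\int f\,d\nu : f \text{ 1-Lipschitz}\}$. $\sigma(x_1,x_2,\dots)=(x_2,x_3,\dots)$. *)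

(* Defs.v *)
From HB Require Import structures.
From mathcomp Require Import all_boot all_order all_algebra.
From mathcomp Require Import all_classical all_reals all_analysis.
Set Implicit Arguments. Unset Strict Implicit. Unset Printing Implicit Defensive.
Import Order.TTheory GRing.Theory Num.Theory.
Local Open Scope classical_set_scope.
Local Open Scope ring_scope.

(* The alphabet {1,...,m} is represented by 'I_m with m = n.+1 (so m >= 1). *)
Definition sym (n : nat) := 'I_n.+1.
HB.instance Definition _ n := Choice.on (sym n).
HB.instance Definition _ n := isPointed.Build (sym n) ord0.

Definition OmegaT (n : nat) := nat -> sym n.
HB.instance Definition _ n := Pointed.on (OmegaT n).

Section Defs.
Variables (R : realType) (n : nat).

Definition dOmega (a b : OmegaT n) : R :=
  match pselect (exists i, a i != b i) with
  | left h => (2 ^-1) ^+ (ex_minn h)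
  | right _ => 0
  end.

Definition dOmega_open (A : set (OmegaT n)) : Prop :=
  forall x, A x -> exists2 e : R, 0 < e & forall y, dOmega x y < e -> A y.

Definition Omega := g_sigma_algebraType dOmega_open.
HB.instance Definition _ := Measurable.on Omega.

Definition shift (x : Omega) : Omega := fun i => x i.+1.

Definition one_Lipschitz (f : Omega -> R) : Prop :=
  forall x y, `|f x - f y| <= dOmega x y.

Definition dMK (mu nu : set Omega -> \bar R) : R :=
  sup [set r : R | exists2 f : Omega -> R, one_Lipschitz f &
     r = fine (\int[mu]_x (f x)%:E) - fine (\int[nu]_x (f x)%:E)].

Definition Tpush (mu : set Omega -> \bar R) : set Omega -> \bar R :=
  pushforward mu shift.

End Defs.

(* Main.v *)
Require Import Defs.
From HB Require Import structures.
From mathcomp Require Import all_boot all_order all_algebra.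
From mathcomp Require Import all_classical all_reals all_analysis.
From mathcomp Require Import ring lra.
Import Order.TTheory GRing.Theory Num.Theory Num.Def.
Local Open Scope classical_set_scope.
Local Open Scope ring_scope.
Set Implicit Arguments. Unset Strict Implicit.
Section Metric.
Variables (R : realType) (n : nat).
Local Notation Om := (Omega R n).
Local Notation dO := (@dOmega R n).

Lemma half_ge0 : 0 <= (2^-1 : R). Proof. by rewrite invr_ge0. Qed.
Lemma half_le1 : (2^-1 : R) <= 1. Proof. by rewrite invf_le1// ler1n. Qed.

Lemma dO_ge0 (x y : Om) : 0 <= dO x y.
Proof. by rewrite /dOmega; case: pselect => // h; rewrite exprn_ge0 // half_ge0. Qed.

Lemma dO_le1 (x y : Om) : dO x y <= 1.
Proof.
rewrite /dOmega; case: pselect => // h.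
by rewrite exprn_ile1 // ?half_ge0 ?half_le1.
Qed.

Lemma dO_le L (x y : Om) : (forall i, (i < L)%N -> x i = y i) ->
  dO x y <= 2^-1 ^+ L.
Proof.
move=> hL; rewrite /dOmega; case: pselect => [h|_]; last first.
  by rewrite exprn_ge0 // half_ge0.
case: ex_minnP => k kxy _.
apply: ler_wiXn2l; rewrite ?half_ge0 ?half_le1 //.
rewrite leqNgt; apply/negP => kL.
by move: kxy; rewrite hL // eqxx.
Qed.

Lemma dO_lt L (x y : Om) : dO x y < 2^-1 ^+ L -> forall i, (i <= L)%N -> x i = y i.
Proof.
move=> hd i iL; apply/eqP; apply/negP => /negP xy.
move: hd; rewrite /dOmega; case: pselect => [h|h]; last first.
  by exfalso; apply: h; exists i.
case: ex_minnP => k kxy kmin.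
have ki := kmin _ xy.
rewrite ltNge => /negP; apply.
apply: ler_wiXn2l; rewrite ?half_ge0 ?half_le1 //.
exact: leq_trans ki iL.
Qed.

End Metric.
Lemma half_pow_lt {R : realType} {e : R} : 0 < e -> exists L, (2^-1 : R) ^+ L < e.
Proof.
move=> e0; exists (truncn (e^-1)).
set L := truncn _.
have h1 : e^-1 < (2 ^ L)%:R.
  apply: (lt_le_trans (truncnS_gt _)); rewrite ler_nat; exact: ltn_expl.
rewrite exprVn -natrX.
have -> : e = (e^-1)^-1 by rewrite invrK.
rewrite ltf_pV2 ?posrE ?invr_gt0 // ltr0n expn_gt0.
Qed.

Section Meas.
Variables (R : realType) (n : nat).
Local Notation Om := (Omega R n).
Local Notation dO := (@dOmega R n).

Definition cylS (s : seq (sym n)) : set Om :=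
  [set x | forall i, (i < size s)%N -> x i = nth ord0 s i].

Lemma cylS_open s : dOmega_open R (cylS s).
Proof.
move=> x xs; exists (2^-1 ^+ size s); first by rewrite exprn_gt0 // invr_gt0.
move=> y /dO_lt h i iL; rewrite -xs //; symmetry; apply: h; exact: ltnW.
Qed.

Lemma cylS_meas s : measurable (cylS s).
Proof. by apply: sub_sigma_algebra; exact: cylS_open. Qed.

Lemma lip_meas (f : Om -> R) : one_Lipschitz f -> measurable_fun setT f.
Proof.
move=> lf; apply: (measurability _ (measurable_realfun.RGenInftyO.measurableE R)).
move=> _ [_ [r ->] <-]; apply: sub_sigma_algebra.
move=> x [_ /=]; rewrite in_itv /= => fxr.
exists (r - f x); first by rewrite subr_gt0.
move=> y dxy; split => //=; rewrite in_itv /=.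
have := lf x y; rewrite ler_norml => /andP[h _].
lra.
Qed.


Lemma cylS_prefix (x : Om) L : cylS [seq x i | i <- iota 0 L] x.
Proof.
move=> i; rewrite size_map size_iota => iL.
by rewrite (nth_map 0%N) ?size_iota // nth_iota.
Qed.

Lemma cylS_prefix_dO (x y : Om) L : cylS [seq x i | i <- iota 0 L] y ->
  dO x y <= 2^-1 ^+ L.
Proof.
move=> h; apply: dO_le => i iL.
have := h i; rewrite size_map size_iota => /(_ iL) ->.
by rewrite (nth_map 0%N) ?size_iota // nth_iota.
Qed.

Lemma coord_meas d (T : measurableType d) (Psi : T -> Om) :
  (forall i a, measurable [set t | Psi t i = a]) -> measurable_fun setT Psi.
Proof.
move=> hc; apply: (@measurability _ _ _ _ setT Psi (@dOmega_open R n)) => //.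
move=> _ [A oA <-]; rewrite setTI.
pose C (k : nat) : set Om := match (unpickle k : option (seq (sym n))) with
  | Some s => if pselect (cylS s `<=` A) then cylS s else set0
  | None => set0 end.
have -> : A = \bigcup_k C k.
  apply/seteqP; split.
    move=> x Ax; have [e e0 he] := oA x Ax.
    have [L hL] := half_pow_lt e0.
    set s := [seq x i | i <- iota 0 L].
    have sA : cylS s `<=` A.
      move=> y ys; apply: he; apply: le_lt_trans hL; exact: cylS_prefix_dO.
    exists (pickle s) => //.
    rewrite /C pickleK.
    case: pselect => h; first exact: cylS_prefix.
    by exfalso; apply: h.
  move=> x [k _]; rewrite /C; case: (unpickle k) => // s.
  by case: pselect => // h /h.
rewrite preimage_bigcup; apply: bigcupT_measurable => k.
rewrite /C; case: (unpickle k) => [s|]; last by rewrite preimage_set0.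
case: pselect => h; last by rewrite preimage_set0.
have -> : Psi @^-1` cylS s = \bigcap_i (if (i < size s)%N then
    [set t | Psi t i = nth ord0 s i] else setT).
  apply/seteqP; split.
    move=> t ht i _; case: ifPn => // iL; exact: ht.
  move=> t ht i iL; have := ht i I; by rewrite iL.
apply: bigcapT_measurable => i; case: ifPn => // _.
Qed.

End Meas.

Section Idx.
Variables (R : realType).
Local Notation RT := (measurableTypeR R).
Lemma tn_meas d : measurable [set y : R | truncn y = d].
Proof.
case: d => [|d].
  have -> : [set y : R | truncn y = 0%N] = `]-oo, 1[%classic.
    apply/seteqP; split => y /=; rewrite in_itv /=.
      by move=> h; rewrite -[1]/(0%N.+1%:R) -truncn_le_nat h.
    by rewrite -[1]/(0%N.+1%:R) -truncn_le_nat leqn0 => /eqP.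
  done.
have -> : [set y : R | truncn y = d.+1] = `]-oo, d.+2%:R[%classic `&` `[d.+1%:R, +oo[%classic.
  apply/seteqP; split => y /=; rewrite !in_itv /= ?andbT.
    by move=> h; rewrite -truncn_le_nat -truncn_gt_nat h leqnn.
  by case=> h1 h2; apply/eqP; rewrite eqn_leq truncn_le_nat h1 truncn_gt_nat h2.
by apply: measurableI.
Qed.

Lemma idx_meas N d : measurable [set t : RT | truncn ((t : R) * N%:R) = d].
Proof.
have := @measurable_realfun.mulrr_measurable R setT N%:R measurableT _ (tn_meas d).
by rewrite setTI.
Qed.
End Idx.

Section Phi.
Variables (R : realType) (n : nat).
Local Notation Om := (Omega R n).
Local Notation RT := (measurableTypeR R).

Definition idx (N : nat) (t : RT) : nat := truncn ((t : R) * N%:R).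
Definition desc (c : nat) : seq (seq (sym n)) :=
  odflt [::] (unpickle (c - 2 ^ trunc_log 2 c)%N).
Definition Phi (t : RT) : Om := fun i =>
  nth ord0 (nth [::] (desc (trunc_log 2 i)) (idx (size (desc (trunc_log 2 i))) t))
      (i - 2 ^ trunc_log 2 i)%N.
Definition Phik k (t : RT) : Om := fun i => Phi t (i + k)%N.

Lemma step_meas N (G : nat -> sym n) a : measurable [set t : RT | G (idx N t) = a].
Proof.
have -> : [set t : RT | G (idx N t) = a] =
    \bigcup_d (if G d == a then [set t : RT | idx N t = d] else set0).
  apply/seteqP; split => t /=.
    by move=> h; exists (idx N t) => //; rewrite h eqxx.
  by move=> [d _]; case: eqP => // <- ->.
apply: bigcupT_measurable => d; case: eqP => // _; exact: idx_meas.
Qed.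

Lemma Phik_meas k : measurable_fun setT (Phik k).
Proof.
apply: coord_meas => i a.
exact: (step_meas (size (desc (trunc_log 2 (i + k)%N)))
  (fun d => nth ord0 (nth [::] (desc (trunc_log 2 (i + k)%N)) d)
      (i + k - 2 ^ trunc_log 2 (i + k))%N)).
Qed.

HB.instance Definition _ k := isMeasurableFun.Build _ _ _ _ (Phik k) (Phik_meas k).

Definition P0 : probability RT R := uniform_prob (@ltr01 R).
Definition mu0 : probability Om R := distribution P0 (Phik 0).

Lemma iterT k : iter k (@Tpush R n) mu0 = distribution P0 (Phik k).
Proof.
elim: k => [|k IH] //=.
apply/funext => A; rewrite IH /Tpush /distribution /pushforward.
congr (P0 _); apply/seteqP; split => t /=;
  have -> // : Defs.shift (Phik k t) = Phik k.+1 t;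
  by apply/funext => i; rewrite /Defs.shift /Phik addSnnS.
Qed.

End Phi.

Section Core.
Variables (R : realType) (n : nat).
Local Notation Om := (Omega R n).
Local Notation dO := (@dOmega R n).

Lemma dO_mono (x y a b : Om) :
  (forall k, (forall i, (i < k)%N -> x i = y i) -> forall i, (i < k)%N -> a i = b i) ->
  dO a b <= dO x y.
Proof.
move=> hk; rewrite {2}/dOmega; case: pselect => [h|h].
  case: ex_minnP => k kxy kmin; apply: dO_le; apply: hk => i ik.
  apply/eqP; apply/negP => /negP xy; have := kmin _ xy; by rewrite leqNgt ik.
have xy : forall i, x i = y i.
  move=> i; apply/eqP; apply/negP => /negP xy; apply: h; by exists i.
rewrite /dOmega; case: pselect => // -[i abi]; exfalso.
move: abi; rewrite (hk i.+1) ?eqxx // => j _; exact: xy.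
Qed.

Definition wordof L (x : Om) : L.-tuple (sym n) := [tuple x (nat_of_ord i) | i < L].
Definition ext {L} (w : L.-tuple (sym n)) : Om := fun i => nth ord0 w i.
Definition tr L (x : Om) : Om := ext (wordof L x).

Lemma nth_wordof L (x : Om) i : (i < L)%N -> nth ord0 (wordof L x) i = x i.
Proof. move=> iL; by rewrite -[i]/(nat_of_ord (Ordinal iL)) -tnth_nth tnth_mktuple. Qed.

Lemma cyl_wordof L (x : Om) (w : L.-tuple (sym n)) : cylS w x <-> wordof L x = w.
Proof.
split.
  move=> h; apply: eq_from_tnth => i; rewrite tnth_mktuple (tnth_nth ord0).
  by apply: h; rewrite size_tuple.
move=> <- i; rewrite size_tuple => iL; by rewrite nth_wordof.
Qed.

Lemma tr_close L (x : Om) : dO x (tr L x) <= 2^-1 ^+ L.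
Proof. by apply: dO_le => i iL; rewrite /tr /ext nth_wordof. Qed.

Lemma tr_lip L (f : Om -> R) : one_Lipschitz f -> one_Lipschitz (fun x => f (tr L x)).
Proof.
move=> lf x y; apply: le_trans (lf _ _) _; apply: dO_mono => k hk i ik.
rewrite /tr /ext; case: (ltnP i L) => iL; first by rewrite !nth_wordof // hk.
by rewrite !nth_default // size_tuple.
Qed.

Lemma lip_bounded (f : Om -> R) : one_Lipschitz f -> forall x, `|f x| <= `|f (fun _ => ord0)| + 1.
Proof.
move=> lf x; have := lf x (fun _ => ord0); have := dO_le1 x (fun _ => ord0).
move: (f x) (f (fun _ => ord0)) (dO x (fun _ => ord0)) => a b c h1 h2.
have h3 : `|a| <= `|a - b| + `|b|.
  by rewrite -{1}(subrK b a) ler_normD.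
apply: le_trans h3 _; rewrite addrC lerD2l; exact: le_trans h2 h1.
Qed.

Variable P : probability Om R.

Lemma PsetT : P [set: Om] = 1%E. Proof. exact: probability_setT. Qed.

Lemma lip_int (f : Om -> R) : one_Lipschitz f -> P.-integrable setT (EFin \o f).
Proof.
move=> lf; apply: measurable_bounded_integrable => //.
- by apply: (le_lt_trans (probability_le1 P measurableT)); rewrite ltry.
- exact: lip_meas.
exists (`|f (fun _ => ord0)| + 1); split; first by rewrite num_real.
move=> M hM x _ /=; apply: le_trans (lip_bounded lf x) _; exact: ltW.
Qed.


Lemma I2 L (h : L.-tuple (sym n) -> R) :
  \int[P]_x (h (wordof L x)) = \sum_(w : L.-tuple (sym n)) h w * fine (P (cylS w)).
Proof.
have E x : h (wordof L x) = \sum_(w : L.-tuple (sym n)) h w * \1_(cylS w) x.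
  have hx : cylS (wordof L x) x by apply/cyl_wordof.
  rewrite (bigD1 (wordof L x)) //= indicE (mem_set hx).
  rewrite mulr1 big1 ?addr0 // => w /negbTE hw.
  rewrite indicE memNset ?mulr0 // => /cyl_wordof wx.
  by rewrite wx eqxx in hw.
rewrite /Rintegral.
under eq_integral do rewrite E -sumEFin.
rewrite integral_sum //; last first.
  move=> w; under eq_fun do rewrite EFinM.
  apply: integrableZl => //; apply: integrable_indic; exact: cylS_meas.
transitivity (fine (\sum_(w : L.-tuple (sym n)) (h w * fine (P (cylS w)))%:E)); last by rewrite sumEFin.
congr fine; apply: eq_bigr => w _.
under eq_integral do rewrite EFinM.
rewrite integralZl //; last by apply: integrable_indic; exact: cylS_meas.
rewrite integral_indic ?setIT //; last exact: cylS_meas.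
rewrite EFinM fineK // fin_num_measure //; exact: cylS_meas.
Qed.

Lemma tr_bound L (f : Om -> R) : one_Lipschitz f ->
  `| \int[P]_x f x - \int[P]_x f (tr L x) | <= 2^-1 ^+ L.
Proof.
move=> lf.
have i1 := lip_int lf; have i2 := lip_int (tr_lip L lf).
have i3 : P.-integrable setT (EFin \o (fun x => f x - f (tr L x))).
  have -> : (EFin \o (fun x => f x - f (tr L x))) = ((EFin \o f) \- (EFin \o (fun x => f (tr L x))))%E.
    by apply/funext => x /=; rewrite EFinB.
  exact: integrableB.
rewrite -RintegralB //.
apply: le_trans (le_normr_Rintegral _ _) _ => //.
apply: le_trans (@le_Rintegral _ _ _ P setT _ (fun _ => 2^-1 ^+ L) _ _ _ _) _ => //.
- exact: integrable_norm.
- exact: finite_measure_integrable_cst.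
- move=> x _; exact: le_trans (lf x (tr L x)) (tr_close L x).
rewrite /Rintegral integral_cst // [X in fine (_ * X)](_ : _ = 1%E) ?mule1 //.
exact: probability_setT.
Qed.

End Core.

Section Core2.
Variables (R : realType) (n : nat).
Local Notation Om := (Omega R n).
Local Notation dO := (@dOmega R n).

Lemma int1 (P : probability Om R) : \int[P]_x (1 : R) = 1.
Proof.
rewrite /Rintegral integral_cst // [X in fine (_ * X)](_ : _ = 1%E) ?mule1 //.
exact: probability_setT.
Qed.

Lemma dMK_le (P Q : probability Om R) L (δ : R) :
  \sum_(w : L.-tuple (sym n)) `|fine (P (cylS w)) - fine (Q (cylS w))| <= δ ->
  dMK P Q <= 2 * 2^-1 ^+ L + δ.
Proof.
move=> hd; apply: ge_sup.
  exists (fine (\int[P]_x ((fun _ : Om => 0 : R) x)%:E) - fine (\int[Q]_x ((fun _ : Om => 0 : R) x)%:E)).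
  exists (fun _ => 0) => //.
  by move=> x y; rewrite subrr normr0 dO_ge0.
move=> _ [f lf ->].
change (\int[P]_x f x - \int[Q]_x f x <= 2 * 2^-1 ^+ L + δ).
have eP := tr_bound P L lf; have eQ := tr_bound Q L lf.
pose a (w : L.-tuple (sym n)) := f (@ext R n L w).
pose p (w : L.-tuple (sym n)) := fine (P (cylS w)).
pose q (w : L.-tuple (sym n)) := fine (Q (cylS w)).
have gP : \int[P]_x f (tr L x) = \sum_w a w * p w by exact: (@I2 R n P L (fun w => f (@ext R n L w))).
have gQ : \int[Q]_x f (tr L x) = \sum_w a w * q w by exact: (@I2 R n Q L (fun w => f (@ext R n L w))).
have sP : \sum_(w : L.-tuple (sym n)) p w = 1.
  rewrite -(int1 P) (@I2 R n P L (fun _ => 1)); apply: eq_bigr => w _; by rewrite mul1r.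
have sQ : \sum_(w : L.-tuple (sym n)) q w = 1.
  rewrite -(int1 Q) (@I2 R n Q L (fun _ => 1)); apply: eq_bigr => w _; by rewrite mul1r.
pose a0 := f (fun _ => ord0).
have key : `|\int[P]_x f (tr L x) - \int[Q]_x f (tr L x)| <= δ.
  rewrite gP gQ -sumrB.
  have -> : \sum_w (a w * p w - a w * q w) =
      \sum_w ((a w - a0) * (p w - q w)) + a0 * (\sum_w p w - \sum_w q w).
    rewrite -sumrB mulr_sumr -big_split /=; apply: eq_bigr => w _; ring.
  rewrite sP sQ subrr mulr0 addr0.
  apply: le_trans (ler_norm_sum _ _ _) _; apply: le_trans hd.
  apply: ler_sum => w _; rewrite normrM; apply: ler_piMl => //.
  exact: le_trans (lf _ _) (dO_le1 _ _).
move: eP eQ key; rewrite !ler_norml => /andP[e1 e2] /andP[e3 e4] /andP[e5 e6].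
lra.
Qed.

End Core2.
Section Approx.
Variable R : realType.

Lemma count_flat (W : finType) (c : W -> nat) v :
  count_mem v (flatten [seq nseq (c w) w | w <- enum W]) = c v.
Proof.
rewrite count_flatten -map_comp sumnE big_map big_enum /=.
rewrite (bigD1 v) //= count_nseq /= eqxx mul1n big1 ?addn0 // => w /negbTE wv.
by rewrite count_nseq /= wv.
Qed.

Lemma approx (W : finType) (p : W -> R) : (forall w, 0 <= p w) ->
  \sum_w p w = 1 -> forall δ : R, 0 < δ ->
  exists D : seq W, (0 < size D)%N /\
    \sum_w `|p w - (count_mem w D)%:R / (size D)%:R| <= δ.
Proof.
move=> p0 p1 δ δ0.
have [w0 _] : exists w0 : W, True.
  case: (pickP (@predT W)) => [w0 _|h]; first by exists w0.
  by move: p1; rewrite big_pred0 // => /esym/eqP; rewrite oner_eq0.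
set K := #|W|.
pose N := (truncn (2 * K%:R / δ)).+1.
have N0 : (0 < N)%N by [].
have NR : 0 < N%:R :> R by rewrite ltr0n.
pose c w := truncn (p w * N%:R).
have c1 w : (c w)%:R <= p w * N%:R.
  by rewrite truncn_le mulr_ge0 // ler0n.
have c2 w : p w * N%:R < (c w)%:R + 1.
  by rewrite natr1; exact: truncnS_gt.
pose S := (\sum_w c w)%N.
have SR : S%:R = \sum_w (c w)%:R :> R by rewrite natr_sum.
have SN : (S <= N)%N.
  rewrite -(ler_nat R) SR; apply: le_trans (ler_sum _ (fun w _ => c1 w)) _.
  by rewrite -mulr_suml p1 mul1r.
pose r := (N - S)%N.
have rR : r%:R = N%:R - S%:R :> R by rewrite natrB.
have rK : r%:R <= K%:R :> R.
  rewrite rR SR.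
  have : \sum_w (p w * N%:R) <= \sum_w ((c w)%:R + 1) :> R.
    by apply: ler_sum => w _; exact: ltW.
  rewrite -mulr_suml p1 mul1r big_split /= sumr_const -/K.
  move=> h; rewrite lerBlDr; apply: le_trans h _.
  by rewrite addrC.
pose D := flatten [seq nseq (c w) w | w <- enum W] ++ nseq r w0.
have sD : size D = N.
  rewrite size_cat size_nseq size_flatten /shape -map_comp sumnE big_map big_enum /=.
  rewrite (eq_bigr c); last by move=> w _; rewrite /= size_nseq.
  by rewrite -/S subnKC.
have cD v : count_mem v D = (c v + (w0 == v) * r)%N.
  by rewrite count_cat count_flat count_nseq.
exists D; split; first by rewrite sD.
rewrite sD.
have step v : `|p v - (count_mem v D)%:R / N%:R| <= N%:R^-1 + (w0 == v)%:R * (r%:R / N%:R).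
  rewrite cD natrD natrM mulrDl.
  have h1 : `|p v - (c v)%:R / N%:R| <= N%:R^-1.
    have -> : p v - (c v)%:R / N%:R = (p v * N%:R - (c v)%:R) / N%:R.
      by field; rewrite gt_eqF.
    rewrite normrM normfV (gtr0_norm NR) -[X in _ <= X]mul1r ler_pM2r ?invr_gt0 //.
    rewrite ler_norml; have := c1 v; have := c2 v; lra.
  rewrite opprD addrA; apply: le_trans (ler_normB _ _) _; apply: lerD => //.
  by rewrite ger0_norm ?mulrA // divr_ge0 // mulr_ge0.
apply: le_trans (ler_sum _ (fun v _ => step v)) _.
rewrite big_split /= sumr_const -/K -mulr_suml.
rewrite (bigD1 w0) //= eqxx big1 ?addr0 ?mul1r; last first.
  by move=> v /negbTE; rewrite eq_sym => ->.
have hN : 2 * K%:R / δ < N%:R by exact: truncnS_gt.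
have hN2 : 2 * K%:R < δ * N%:R by rewrite -ltr_pdivrMl // mulrC.
rewrite -(mulr_natl (N%:R^-1) K) -mulrDl.
rewrite ler_pdivrMr //; apply: le_trans (ltW hN2); lra.
Qed.
End Approx.

Section Base.
Variables (R : realType) (n : nat).
Local Notation RT := (measurableTypeR R).
Local Notation P0 := (@P0 R).
Local Notation idx := (@idx R).

Lemma P0E (U : set RT) : measurable U -> P0 U = lebesgue_measure (U `&` `[0, 1]%classic).
Proof.
move=> mU; change ((\int[lebesgue_measure]_(x in U) (uniform_pdf 0 1 x)%:E) = lebesgue_measure (U `&` `[0%R, 1%R]%classic))%E.
rewrite integral_uniform_pdf.
rewrite (eq_integral (fun _ => 1%:E)); last first.
  move=> x; rewrite inE => -[_ /=]; rewrite in_itv /= /uniform_pdf => ->.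
  by rewrite subr0 invr1.
rewrite integral_cst ?mul1e //; exact: measurableI.
Qed.

Lemma idxP_meas N (Q : pred nat) : measurable [set t : RT | Q (idx N t)].
Proof.
have -> : [set t : RT | Q (idx N t)] =
    \bigcup_d (if Q d then [set t : RT | idx N t = d] else set0).
  apply/seteqP; split => t /=.
    by move=> h; exists (idx N t) => //; rewrite h.
  by move=> [d _]; case: ifP => // Qd /= ->.
apply: bigcupT_measurable => d; case: ifP => // _; exact: idx_meas.
Qed.

Lemma P0_idx N d : (d < N)%N -> P0 [set t | idx N t = d] = (N%:R^-1)%:E.
Proof.
move=> dN; have N0 : 0 < N%:R :> R by rewrite ltr0n (leq_ltn_trans _ dN).
rewrite P0E; last exact: idx_meas.
have -> : [set t : RT | idx N t = d] `&` `[0, 1]%classic =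
    `[(d%:R / N%:R), (d.+1%:R / N%:R)[%classic.
  apply/seteqP; split => t /=.
    rewrite in_itv /= => -[h /andP[t0 t1]]; rewrite in_itv /=.
    have /truncn_itv : 0 <= (t : R) * N%:R by rewrite mulr_ge0.
    rewrite -/(idx N t) h => /andP[h1 h2].
    by rewrite ler_pdivrMr // ltr_pdivlMr // h1 h2.
  rewrite in_itv /= => /andP[h1 h2].
  have t0 : 0 <= (t : R) by apply: le_trans h1; rewrite divr_ge0.
  have t1 : (t : R) <= 1.
    apply: ltW; apply: lt_le_trans h2 _; rewrite ler_pdivrMr // mul1r ler_nat //.
  split; last by rewrite in_itv /= t0 t1.
  apply/eqP; rewrite /idx truncn_eq ?mulr_ge0 //.
  by rewrite -ler_pdivrMr // -ltr_pdivlMr // h1 h2.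
rewrite lebesgue_measure_itv /= lte_fin ltr_pM2r ?invr_gt0 // ltr_nat ltnSn.
by rewrite -EFinB -mulrBl -natrB // subSnn mul1r.
Qed.


Lemma P0_over N : (0 < N)%N -> P0 [set t | (N <= idx N t)%N] = 0%E.
Proof.
move=> N0; have NR : 0 < N%:R :> R by rewrite ltr0n.
rewrite P0E; last exact: idxP_meas.
apply/eqP; rewrite eq_le measure_ge0 andbT.
have -> : 0%E = lebesgue_measure (`[1%R, 1%R]%classic : set RT).
  by rewrite lebesgue_measure_itv /= lte_fin ltxx.
apply: le_measure; rewrite ?inE //.
- apply: measurableI => //; exact: idxP_meas.
- move=> t [/= h]; rewrite !in_itv /= => /andP[t0 t1]; rewrite t1 andbT.
  move: h; rewrite /idx truncn_ge_nat ?mulr_ge0 // -[X in X <= _ -> _]mul1r ler_pM2r //.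
Qed.

Lemma count_nthE (T : eqType) (x0 : T) (D : seq T) w :
  count_mem w D = (\sum_(d < size D) (nth x0 D d == w))%N.
Proof.
rewrite -sum1_count (big_nth x0) big_mkord big_mkcond /=.
by apply: eq_bigr => i _; case: eqP.
Qed.

Lemma P0_word (T : eqType) (x0 : T) (D : seq T) w : (0 < size D)%N ->
  P0 [set t | (idx (size D) t < size D)%N && (nth x0 D (idx (size D) t) == w)] =
  ((count_mem w D)%:R / (size D)%:R)%:E.
Proof.
move=> N0; set N := size D.
pose F (d : 'I_N) := if nth x0 D d == w then [set t : RT | idx N t = d] else set0.
have mF d : measurable (F d) by rewrite /F; case: ifP => // _; exact: idx_meas.
have -> : [set t | (idx N t < N)%N && (nth x0 D (idx N t) == w)] =
    \big[setU/set0]_(d < N) F d.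
  apply/seteqP; split => t /=.
    move=> /andP[tN tw]; rewrite -bigcup_seq; exists (Ordinal tN) => /=.
      by rewrite mem_index_enum.
    by rewrite /F /= tw.
  rewrite -bigcup_seq => -[d _]; rewrite /F; case: ifP => // dw /= ->.
  by rewrite ltn_ord dw.
rewrite measure_semi_additive_ord //; last first.
- by apply: bigsetU_measurable => d _.
- apply/trivIsetP => i j _ _ ij; rewrite /F.
  case: ifP => _; case: ifP => _; rewrite ?set0I ?setI0 //.
  apply/seteqP; split => t //= [-> /val_inj e]; by rewrite e eqxx in ij.
rewrite (eq_bigr (fun d : 'I_N => ((nth x0 D d == w)%:R * N%:R^-1)%:E)); last first.
  move=> d _; rewrite /F; case: ifP => _; last by rewrite mul0r measure0.
  rewrite mul1r; symmetry; have h := P0_idx (ltn_ord d). exact (esym h).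
rewrite sumEFin -mulr_suml (count_nthE x0) natr_sum.
done.
Qed.

End Base.

Section Main.
Variables (R : realType) (n : nat).
Local Notation Om := (Omega R n).
Local Notation RT := (measurableTypeR R).

Lemma block_word L (D : seq (L.-tuple (sym n))) c (t : RT) :
  desc n c = map val D -> (L <= 2 ^ c)%N -> (idx (size D) t < size D)%N ->
  wordof L (@Phik R n (2 ^ c) t) = nth (nseq_tuple L ord0) D (idx (size D) t).
Proof.
move=> hd cL tN; apply: eq_from_tnth => i.
rewrite tnth_mktuple /Phik /Phi.
have iL : (i < 2 ^ c)%N := leq_trans (ltn_ord i) cL.
have tl : trunc_log 2 (i + 2 ^ c) = c.
  apply: trunc_log_eq => //; rewrite leq_addl /= expnS mul2n -addnn ltn_add2r //.
rewrite tl hd size_map addnK (nth_map (nseq_tuple L ord0)) // (tnth_nth ord0).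
done.
Qed.

Lemma choose_c L (D : seq (L.-tuple (sym n))) :
  exists c, desc n c = map val D /\ (L <= 2 ^ c)%N.
Proof.
set a := pickle (map val D).
set K := maxn L a.
have aK : (a < 2 ^ K)%N.
  apply: leq_trans (ltn_expl a (isT : (1 < 2)%N)) _.
  by rewrite leq_pexp2l // leq_maxr.
exists (2 ^ K + a)%N; split.
  have tl : trunc_log 2 (2 ^ K + a) = K.
    apply: trunc_log_eq => //; rewrite leq_addr /= expnS mul2n -addnn ltn_add2l //.
  by rewrite /desc tl addKn pickleK.
apply: leq_trans (ltnW (ltn_expl _ (isT : (1 < 2)%N))).
apply: leq_trans (leq_addr _ _); apply: leq_trans (ltnW (ltn_expl _ (isT : (1 < 2)%N))).
exact: leq_maxl.
Qed.


Lemma word_prob L (D : seq (L.-tuple (sym n))) c (w : L.-tuple (sym n)) :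
  desc n c = map val D -> (L <= 2 ^ c)%N -> (0 < size D)%N ->
  distribution (P0 R) (@Phik R n (2 ^ c)) (cylS w) =
  ((count_mem w D)%:R / (size D)%:R)%:E.
Proof.
move=> hd cL D0.
change (P0 R (@Phik R n (2 ^ c) @^-1` cylS w) = ((count_mem w D)%:R / (size D)%:R)%:E).
set N := size D.
set A := @Phik R n (2 ^ c) @^-1` cylS w.
set C := [set t : RT | (idx N t < N)%N].
have mA : measurable A.
  by have := @Phik_meas R n (2 ^ c) measurableT _ (cylS_meas w); rewrite setTI.
have mC : measurable C by exact: (idxP_meas N (fun m => (m < N)%N)).
have h : P0 R A = (P0 R (A `\` C) + P0 R (A `&` C))%E.
  have h := measureDI (P0 R) mA mC; exact h.
have hAC : A `&` C = [set t | (idx N t < N)%N && (nth (nseq_tuple L ord0) D (idx N t) == w)].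
  apply/seteqP; split => t /=.
    move=> [/cyl_wordof h1 h2]; rewrite h2 /=.
    by rewrite (block_word hd cL h2) in h1; rewrite h1 eqxx.
  move=> /andP[h1 /eqP h2]; split => //; rewrite /A /=.
  apply/(@cyl_wordof R n L); by rewrite (block_word hd cL h1).
have hz : P0 R (A `\` C) = 0%E.
  apply/eqP; rewrite eq_le measure_ge0 andbT.
  have h0 := P0_over R D0.
  have sub : A `\` C `<=` [set t : RT | (N <= idx N t)%N].
    by move=> t [_ /= /negP]; rewrite -leqNgt.
  have mZ : measurable [set t : RT | (N <= idx N t)%N] by exact: (idxP_meas N (fun m => (N <= m)%N)).
  have l := le_measure (P0 R) (mem_set (measurableD mA mC)) (mem_set mZ) sub.
  apply: (le_trans l); rewrite le_eqVlt; apply/orP; left; apply/eqP; exact h0.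
rewrite h hz add0e hAC.
have := P0_word R (nseq_tuple L ord0) w D0; move=> h2; exact h2.
Qed.

End Main.

Lemma sum_p1 (R : realType) (n : nat) (P : probability (Omega R n) R) L :
  \sum_(w : L.-tuple (sym n)) fine (P (cylS w)) = 1.
Proof.
rewrite -(int1 P) (@I2 R n P L (fun _ => 1)); apply: eq_bigr => w _; by rewrite mul1r.
Qed.

Theorem corollary2p9 (R : realType) (n : nat) :
  exists mu : probability (Omega R n) R,
    forall (nu : probability (Omega R n) R) (eps : R), 0 < eps ->
      exists k : nat, dMK (iter k (@Tpush R n) mu) nu < eps.
Proof.
exists (mu0 R n) => nu eps e0.
have e4 : 0 < eps / 4 by rewrite divr_gt0.
have [L hL] := half_pow_lt e4.
pose p (w : L.-tuple (sym n)) := fine (nu (cylS w)).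
have p0 w : 0 <= p w by rewrite /p fine_ge0 // measure_ge0.
have [D [D0 hD]] := approx p0 (sum_p1 nu L) e4.
have [c [hc cL]] := choose_c D.
exists (2 ^ c)%N; rewrite iterT.
have hk : dMK (distribution (P0 R) (@Phik R n (2 ^ c))) nu <= 2 * 2^-1 ^+ L + eps / 4.
  apply: dMK_le.
  apply: le_trans hD; apply: ler_sum => w _.
  have hw := word_prob R w hc cL D0.
  have hw' : fine (distribution (P0 R) (@Phik R n (2 ^ c)) (cylS w)) = (count_mem w D)%:R / (size D)%:R.
    by rewrite hw.
  rewrite distrC le_eqVlt; apply/orP; left; apply/eqP.
  congr (`|_ - _|); exact hw'.
apply: (le_lt_trans hk).
have h1 : 0 <= (2^-1 : R) ^+ L by rewrite exprn_ge0 // invr_ge0.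
lra.
Qed.
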